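(* Let $p,q\ge 3$ be relatively prime odd integers with $q\equiv\pm1\pmod p$. Then $$\sum_{\substack{n=1\\ p\nmid n,\ q\nmid n}}^{pq-1}\frac{\cot(\pi n/p)\cot(\pi n/q)}{\cos^2(\pi n/(pq))}=\begin{cases}\dfrac{2}{p}(p^2-1)(q-1), & q\equiv 1\pmod p,\\[2mm] \dfrac{2}{p}(p^2-1)(q+1), & q\equiv -1\pmod p.\end{cases}$$ *)

(* Defs.v *)
From Stdlib Require Import Reals Lra Lia Arith List Bool.
Open Scope R_scope.
Definition cot (x : R) : R := cos x / sin x.

Definition term (p q n : nat) : R :=
  cot (PI * INR n / INR p) * cot (PI * INR n / INR q)
  / (cos (PI * INR n / INR (p * q)))^2.

Definition S (p q : nat) : R :=
  fold_right Rplus 0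
    (map (term p q)
       (filter (fun n => andb (negb (Nat.eqb (n mod p) 0)) (negb (Nat.eqb (n mod q) 0)))
          (seq 1 (p * q - 1)))).

(* Main.v *)
Require Import Defs.
From Stdlib Require Import Reals Lra Lia Arith List ZArith.
Open Scope R_scope.
Local Notation Sc := Datatypes.S.

Fixpoint sm (n : nat) (f : nat -> R) : R :=
  match n with O => 0 | Sc n' => sm n' f + f n' end.

Lemma sm_ext n f g : (forall i, (i < n)%nat -> f i = g i) -> sm n f = sm n g.
Proof. induction n; intros H; simpl; auto. rewrite IHn by (intros; apply H; lia). rewrite H by lia. auto. Qed.

Lemma sm_plus n f g : sm n (fun i => f i + g i) = sm n f + sm n g.
Proof. induction n; simpl; [lra|]. rewrite IHn. lra. Qed.

Lemma sm_minus n f g : sm n (fun i => f i - g i) = sm n f - sm n g.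
Proof. induction n; simpl; [lra|]. rewrite IHn. lra. Qed.

Lemma sm_scal n c f : sm n (fun i => c * f i) = c * sm n f.
Proof. induction n; simpl; [lra|]. rewrite IHn. lra. Qed.

Lemma sm_zero n : sm n (fun _ => 0) = 0.
Proof. induction n; simpl; [lra|]. rewrite IHn. lra. Qed.

Lemma sm_swap n m f : sm n (fun i => sm m (fun j => f i j)) = sm m (fun j => sm n (fun i => f i j)).
Proof. induction n; simpl. - rewrite sm_zero; auto. - rewrite IHn. rewrite <- sm_plus. auto. Qed.

Lemma sm_shift n f : sm (Sc n) f = f O + sm n (fun i => f (Sc i)).
Proof. induction n; simpl in *; [lra|]. rewrite IHn. lra. Qed.

Lemma sm_split a b f : sm (a + b) f = sm a f + sm b (fun i => f (a + i)%nat).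
Proof. induction b; simpl. - rewrite Nat.add_0_r. lra. - rewrite Nat.add_succ_r. simpl. rewrite IHb. lra. Qed.

Lemma sm_rev n f : sm n f = sm n (fun i => f (n - 1 - i)%nat).
Proof.
  induction n; auto.
  rewrite (sm_shift n (fun i => f (Sc n - 1 - i)%nat)).
  change (sm (Sc n) f) with (sm n f + f n).
  rewrite IHn. replace (Sc n - 1 - 0)%nat with n by lia.
  rewrite (sm_ext n (fun i => f (n - 1 - i)%nat) (fun i => f (Sc n - 1 - Sc i)%nat)).
  - lra.
  - intros; f_equal; lia.
Qed.

Lemma sm_delta n w (b : nat -> bool) c l0 :
  (l0 < n)%nat -> b l0 = true -> (forall l, (l < n)%nat -> b l = true -> l = l0) ->
  sm n (fun l => w l * (if b l then c else 0)) = w l0 * c.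
Proof.
  induction n; intros Hl Hb Hu; [lia|]. simpl.
  destruct (Nat.eq_dec l0 n) as [->|Hne].
  - rewrite Hb. rewrite (sm_ext n _ (fun _ => 0)). rewrite sm_zero. lra.
    intros i Hi. destruct (b i) eqn:E. apply Hu in E; lia. lra.
  - rewrite IHn; try lia; auto. destruct (b n) eqn:E. apply Hu in E; lia. lra.
Qed.

Lemma TA z K : 2 * sin z * sm K (fun l => cos (2 * INR l * z)) = sin ((2 * INR K - 1) * z) + sin z.
Proof.
  induction K; simpl sm.
  - simpl. replace ((2*0-1)*z) with (-z) by ring. rewrite sin_neg. lra.
  - rewrite Rmult_plus_distr_l, IHK. rewrite S_INR.
    replace ((2 * (INR K + 1) - 1) * z) with (2 * INR K * z + z) by ring.
    replace ((2 * INR K - 1) * z) with (2 * INR K * z - z) by ring.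
    rewrite sin_plus, sin_minus. ring.
Qed.

Lemma TB z K : 2 * sin z * sm K (fun l => sin ((2 * INR l + 1) * z)) = 1 - cos (2 * INR K * z).
Proof.
  induction K; simpl sm.
  - simpl. replace (2*0*z) with 0 by ring. rewrite cos_0. lra.
  - rewrite Rmult_plus_distr_l, IHK. rewrite S_INR.
    replace (2 * (INR K + 1) * z) with ((2 * INR K + 1) * z + z) by ring.
    replace (2 * INR K * z) with ((2 * INR K + 1) * z - z) by ring.
    rewrite cos_plus, cos_minus. ring.
Qed.

Lemma TC z K : 2 * sin z * sm K (fun l => cos ((2 * INR l + 1) * z)) = sin (2 * INR K * z).
Proof.
  induction K; simpl sm.
  - simpl. replace (2*0*z) with 0 by ring. rewrite sin_0. lra.
  - rewrite Rmult_plus_distr_l, IHK. rewrite S_INR.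
    replace (2 * (INR K + 1) * z) with ((2 * INR K + 1) * z + z) by ring.
    replace (2 * INR K * z) with ((2 * INR K + 1) * z - z) by ring.
    rewrite sin_plus, sin_minus. ring.
Qed.

Lemma TD z m : 2 * sin z * sm (Sc m) (fun j => INR j * sin (2 * INR j * z)) =
  sm m (fun l => cos ((2 * INR l + 1) * z)) - INR m * cos ((2 * INR m + 1) * z).
Proof.
  induction m.
  - simpl. lra.
  - change (sm (Sc (Sc m)) (fun j => INR j * sin (2 * INR j * z))) with
      (sm (Sc m) (fun j => INR j * sin (2 * INR j * z)) + INR (Sc m) * sin (2 * INR (Sc m) * z)).
    rewrite Rmult_plus_distr_l, IHm. simpl sm. rewrite S_INR.
    replace ((2 * (INR m + 1) + 1) * z) with (2 * (INR m + 1) * z + z) by ring.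
    replace ((2 * INR m + 1) * z) with (2 * (INR m + 1) * z - z) by ring.
    rewrite cos_plus, cos_minus. ring.
Qed.

Lemma TE (N : R) z K : 2 * sin z * sm (Sc K) (fun l => (N - 2 * INR l) * cos (2 * INR l * z)) =
  N * sin z + (N - 2 * INR K) * sin ((2 * INR K + 1) * z) + 2 * sm K (fun l => sin ((2 * INR l + 1) * z)).
Proof.
  induction K.
  - simpl. replace ((2*0+1)*z) with z by ring. replace (2*0*z) with 0 by ring. rewrite cos_0. lra.
  - change (sm (Sc (Sc K)) (fun l => (N - 2 * INR l) * cos (2 * INR l * z))) with
      (sm (Sc K) (fun l => (N - 2 * INR l) * cos (2 * INR l * z)) + (N - 2 * INR (Sc K)) * cos (2 * INR (Sc K) * z)).
    rewrite Rmult_plus_distr_l, IHK. simpl sm. rewrite S_INR.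
    replace ((2 * (INR K + 1) + 1) * z) with (2 * (INR K + 1) * z + z) by ring.
    replace ((2 * INR K + 1) * z) with (2 * (INR K + 1) * z - z) by ring.
    rewrite sin_plus, sin_minus. ring.
Qed.

Definition Cp (p n : nat) : R :=
  -(2 / INR p) * sm (p - 1) (fun i => INR (Sc i) * sin (2 * PI * INR (Sc i) * INR n / INR p)).

Lemma sin_nz_frac p n : (0 < p)%nat -> (n mod p <> 0)%nat -> sin (PI * INR n / INR p) <> 0.
Proof.
  intros Hp Hn Hs. apply sin_eq_0_0 in Hs. destruct Hs as [k Hk].
  assert (Hp' : INR p <> 0) by (apply not_0_INR; lia).
  assert (INR n = IZR k * INR p).
  { apply Rmult_eq_reg_l with PI. 2: apply PI_neq0.
    replace (PI * INR n) with (PI * INR n / INR p * INR p) by (field; auto).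
    rewrite Hk. ring. }
  rewrite !INR_IZR_INZ, <- mult_IZR in H. apply eq_IZR in H.
  apply Hn. apply Nat2Z.inj. rewrite Nat2Z.inj_mod. rewrite H. simpl.
  apply Z.mod_mul. lia.
Qed.

Lemma Cp_cot p n : (0 < p)%nat -> (n mod p <> 0)%nat -> Cp p n = cot (PI * INR n / INR p).
Proof.
  intros Hp Hn. pose proof (sin_nz_frac p n Hp Hn) as Hs.
  set (x := PI * INR n / INR p) in *.
  assert (Hp' : INR p <> 0) by (apply not_0_INR; lia).
  unfold Cp, cot.
  assert (E1 : sm (p - 1) (fun i => INR (Sc i) * sin (2 * PI * INR (Sc i) * INR n / INR p)) =
              sm (Sc (p - 1)) (fun j => INR j * sin (2 * INR j * x))).
  { rewrite sm_shift. simpl INR at 1. rewrite Rmult_0_l, Rplus_0_l.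
    apply sm_ext. intros i _. f_equal. f_equal. unfold x. field. auto. }
  rewrite E1.
  pose proof (TD x (p - 1)) as HD. pose proof (TC x (p - 1)) as HC.
  assert (Hm : INR (p - 1) = INR p - 1) by (rewrite minus_INR by lia; simpl; ring).
  rewrite Hm in HD, HC.
  assert (Hsin : sin (2 * (INR p - 1) * x) = - (2 * sin x * cos x)).
  { replace (2 * (INR p - 1) * x) with (- (2 * x) + 2 * INR n * PI) by (unfold x; field; auto).
    rewrite sin_period, sin_neg, sin_2a. ring. }
  assert (Hcos : cos ((2 * (INR p - 1) + 1) * x) = cos x).
  { replace ((2 * (INR p - 1) + 1) * x) with (- x + 2 * INR n * PI) by (unfold x; field; auto).
    rewrite cos_period, cos_neg. auto. }
  rewrite Hsin in HC. rewrite Hcos in HD.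
  set (T := sm (Sc (p - 1)) (fun j => INR j * sin (2 * INR j * x))) in *.
  set (C := sm (p - 1) (fun l => cos ((2 * INR l + 1) * x))) in *.
  assert (HT : T = - INR p * cos x / (2 * sin x)).
  { apply Rmult_eq_reg_l with (4 * sin x * sin x).
    2: { intro H0. apply Hs. nra. }
    replace (4 * sin x * sin x * T) with (2 * sin x * (2 * sin x * T)) by ring.
    rewrite HD. replace (2 * sin x * (C - (INR p - 1) * cos x)) with (2 * sin x * C - 2 * sin x * (INR p - 1) * cos x) by ring.
    rewrite HC. field. auto. }
  rewrite HT. field. auto.
Qed.

Lemma Cp_zero p n : (0 < p)%nat -> (n mod p = 0)%nat -> Cp p n = 0.
Proof.
  intros Hp Hn. unfold Cp.
  assert (Hp' : INR p <> 0) by (apply not_0_INR; lia).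
  rewrite (sm_ext _ _ (fun _ => 0)). rewrite sm_zero. ring.
  intros i _. apply Nat.Div0.mod_divides in Hn. destruct Hn as [t Ht].
  rewrite sin_eq_0_1. ring. exists (2 * Z.of_nat (Sc i * t))%Z.
  rewrite mult_IZR, <- INR_IZR_INZ, Ht, !mult_INR. simpl (IZR 2). field. auto.
Qed.

Definition w (N l : nat) : R := (-1) ^ l * (INR N - 2 * INR l).
Definition sec2 (N n : nat) : R := sm N (fun l => w N l * cos (INR l * (2 * PI * INR n / INR N))).

Lemma cos_shift_pi y l : cos (y + INR l * PI) = (-1) ^ l * cos y.
Proof.
  induction l. - simpl. replace (y + 0 * PI) with y by ring. ring.
  - rewrite S_INR. replace (y + (INR l + 1) * PI) with ((y + INR l * PI) + PI) by ring.
    rewrite neg_cos, IHl. simpl. ring.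
Qed.

Lemma sec2_eq N n : Nat.Odd N -> 1 / (cos (PI * INR n / INR N)) ^ 2 = sec2 N n.
Proof.
  intros [t Ht].
  assert (HN : INR N <> 0) by (apply not_0_INR; lia).
  set (x := PI * INR n / INR N).
  set (z := x + PI / 2).
  assert (Hsz : sin z = cos x) by (unfold z; rewrite sin_plus, sin_PI2, cos_PI2; ring).
  assert (E1 : sec2 N n = sm (Sc (N - 1)) (fun l => (INR N - 2 * INR l) * cos (2 * INR l * z))).
  { replace (Sc (N - 1)) with N by lia. unfold sec2, w. apply sm_ext. intros l _.
    replace (2 * INR l * z) with (INR l * (2 * PI * INR n / INR N) + INR l * PI) by (unfold z, x; field; auto).
    rewrite cos_shift_pi. ring. }
  rewrite E1.
  pose proof (TE (INR N) z (N - 1)) as HE. pose proof (TB z (N - 1)) as HB.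
  assert (Hm : INR (N - 1) = INR N - 1) by (rewrite minus_INR by lia; simpl; ring).
  rewrite Hm in HE, HB.
  assert (H2N : 2 * INR N * z = PI + 2 * INR (n + t) * PI).
  { assert (HNt : INR N = 2 * INR t + 1) by (rewrite Ht, plus_INR, mult_INR; simpl; ring).
    replace (2 * INR N * z) with (2 * INR n * PI + INR N * PI) by (unfold z, x; field; auto).
    rewrite HNt, plus_INR. ring. }
  assert (Hs1 : sin ((2 * (INR N - 1) + 1) * z) = sin z).
  { replace ((2 * (INR N - 1) + 1) * z) with ((PI - z) + 2 * INR (n + t) * PI) by lra.
    rewrite sin_period, sin_minus, sin_PI, cos_PI. ring. }
  assert (Hc1 : cos (2 * (INR N - 1) * z) = - cos (2 * z)).
  { replace (2 * (INR N - 1) * z) with ((PI - 2 * z) + 2 * INR (n + t) * PI) by lra.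
    rewrite cos_period, cos_minus, sin_PI, cos_PI. ring. }
  rewrite Hs1 in HE. rewrite Hc1, cos_2a_sin in HB.
  rewrite <- Hsz.
  set (U := sm (Sc (N - 1)) (fun l => (INR N - 2 * INR l) * cos (2 * INR l * z))) in *.
  set (V := sm (N - 1) (fun l => sin ((2 * INR l + 1) * z))) in *.
  assert (Hs0 : sin z <> 0).
  { rewrite Hsz. unfold x. intro Hc. apply cos_eq_0_0 in Hc. destruct Hc as [k Hk].
    assert (INR n * 2 = (2 * IZR k + 1) * INR N).
    { apply Rmult_eq_reg_l with (PI / INR N). 2: { apply Rmult_integral_contrapositive; split; [apply PI_neq0|apply Rinv_neq_0_compat; auto]. }
      replace (PI / INR N * (INR n * 2)) with (2 * (PI * INR n / INR N)) by (field; auto).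
      rewrite Hk. field. auto. }
    rewrite !INR_IZR_INZ in H. rewrite <- (mult_IZR _ 2), <- (mult_IZR 2), <- plus_IZR, <- mult_IZR in H.
    apply eq_IZR in H. lia. }
  assert (HU : sin z ^ 2 * U = 1).
  { apply Rmult_eq_reg_l with 4. 2: lra.
    replace (4 * (sin z ^ 2 * U)) with (2 * sin z * (2 * sin z * U)) by ring.
    rewrite HE. replace (2 * sin z * (INR N * sin z + (INR N - 2 * (INR N - 1)) * sin z + 2 * V))
      with (4 * sin z * sin z + 2 * (2 * sin z * V)) by ring.
    rewrite HB. ring. }
  rewrite <- HU. field. intro H0. apply Hs0. nra.
Qed.

Lemma cos_nz N n : Nat.Odd N -> cos (PI * INR n / INR N) <> 0.
Proof.
  intros [t Ht]. assert (HN : INR N <> 0) by (apply not_0_INR; lia).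
  intro Hc. apply cos_eq_0_0 in Hc. destruct Hc as [k Hk].
  assert (INR n * 2 = (2 * IZR k + 1) * INR N).
  { apply Rmult_eq_reg_l with (PI / INR N). 2: { apply Rmult_integral_contrapositive; split; [apply PI_neq0|apply Rinv_neq_0_compat; auto]. }
    replace (PI / INR N * (INR n * 2)) with (2 * (PI * INR n / INR N)) by (field; auto).
    rewrite Hk. field. auto. }
  rewrite !INR_IZR_INZ in H. rewrite <- (mult_IZR _ 2), <- (mult_IZR 2), <- plus_IZR, <- mult_IZR in H.
  apply eq_IZR in H. lia.
Qed.

Lemma sm_const n c : sm n (fun _ => c) = INR n * c.
Proof. induction n; simpl sm; [simpl; ring|]. rewrite IHn, S_INR. ring. Qed.

Lemma cos_2piZ (k : Z) : cos (2 * (IZR k * PI)) = 1.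
Proof. rewrite cos_2a_sin. rewrite sin_eq_0_1 by (exists k; auto). ring. Qed.

Lemma sin_2piZ (k : Z) : sin (2 * (IZR k * PI)) = 0.
Proof. rewrite sin_2a. rewrite sin_eq_0_1 by (exists k; auto). ring. Qed.

Lemma orth N M : (0 < N)%nat ->
  sm N (fun n => cos (IZR M * (2 * PI * INR n / INR N))) =
  if Z.eqb (M mod Z.of_nat N) 0 then INR N else 0.
Proof.
  intros HN. assert (HN' : INR N <> 0) by (apply not_0_INR; lia).
  destruct (Z.eqb_spec (M mod Z.of_nat N) 0) as [H0|H0].
  - apply Z.mod_divide in H0; [|lia]. destruct H0 as [c Hc]. subst M.
    rewrite (sm_ext _ _ (fun _ => 1)). rewrite sm_const. ring.
    intros n _. rewrite <- (cos_2piZ (c * Z.of_nat n)). f_equal.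
    rewrite !mult_IZR, <- !INR_IZR_INZ. field. auto.
  - set (th := PI * IZR M / INR N).
    assert (Hs : sin th <> 0).
    { intro Hs. apply sin_eq_0_0 in Hs. destruct Hs as [k Hk]. apply H0.
      assert (IZR M = IZR k * INR N).
      { apply Rmult_eq_reg_l with (PI / INR N).
        2: { apply Rmult_integral_contrapositive; split; [apply PI_neq0|apply Rinv_neq_0_compat; auto]. }
        replace (PI / INR N * IZR M) with th by (unfold th; field; auto). rewrite Hk. field. auto. }
      rewrite INR_IZR_INZ, <- mult_IZR in H. apply eq_IZR in H. subst M. apply Z.mod_mul. lia. }
    pose proof (TA th N) as HA.
    rewrite (sm_ext _ _ (fun l => cos (2 * INR l * th))).
    2: { intros n _. f_equal. unfold th. field. auto. }
    assert (Hsin : sin ((2 * INR N - 1) * th) = - sin th).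
    { replace ((2 * INR N - 1) * th) with (2 * (IZR M * PI) - th) by (unfold th; field; auto).
      rewrite sin_minus, sin_2piZ, cos_2piZ. ring. }
    rewrite Hsin in HA.
    apply Rmult_eq_reg_l with (2 * sin th). 2: { intro. apply Hs. lra. }
    rewrite HA. ring.
Qed.

Definition W (N : nat) (d : Z) : R :=
  sm N (fun n => cos (IZR d * (2 * PI * INR n / INR N)) * sec2 N n).

Lemma neg1_sq k : (-1) ^ k * (-1) ^ k = 1.
Proof. rewrite <- pow_add. replace (k + k)%nat with (2 * k)%nat by lia. rewrite pow_mult. simpl. rewrite Rmult_1_r.
  replace (-1 * -1) with 1 by ring. apply pow1. Qed.

Lemma neg1_odd N : Nat.Odd N -> (-1) ^ N = -1.
Proof. intros [t ->]. rewrite pow_add, pow_mult. replace ((-1) ^ 2) with 1 by (simpl; ring). rewrite pow1. simpl. ring. Qed.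

Lemma W_neg N d : W N (- d) = W N d.
Proof. unfold W. apply sm_ext. intros n _. rewrite opp_IZR. rewrite Ropp_mult_distr_l_reverse, cos_neg. auto. Qed.

Lemma zu1 (e l N : nat) (c : Z) : (e < N)%nat -> (l < N)%nat -> (Z.of_nat e - Z.of_nat l = c * Z.of_nat N)%Z -> l = e.
Proof. intros. assert (c = 0)%Z. { destruct (Z.lt_trichotomy c 0) as [H2|[H2|H2]]; [|auto|]; exfalso; nia. } subst. lia. Qed.
Lemma zu2 (e l N : nat) (c : Z) : (e < N)%nat -> (l < N)%nat -> (Z.of_nat e + Z.of_nat l = c * Z.of_nat N)%Z -> e <> 0%nat -> l = (N - e)%nat.
Proof. intros. assert (c = 1)%Z. { destruct (Z.lt_trichotomy c 1) as [H5|[H5|H5]]; [|auto|]; exfalso; [assert (c = 0 \/ c < 0)%Z as [->| ] by lia; nia|nia]. } subst. lia. Qed.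
Lemma zu3 (l N : nat) (c : Z) : (l < N)%nat -> (Z.of_nat 0 + Z.of_nat l = c * Z.of_nat N)%Z -> l = 0%nat.
Proof. intros. assert (c = 0)%Z. { destruct (Z.lt_trichotomy c 0) as [H2|[H2|H2]]; [|auto|]; exfalso; nia. } subst. lia. Qed.

Lemma W_nat N e : Nat.Odd N -> (e < N)%nat -> W N (Z.of_nat e) = INR N * (-1) ^ e * (INR N - 2 * INR e).
Proof.
  intros HO He. assert (HN : (0 < N)%nat) by lia.
  unfold W, sec2.
  set (al := fun n => 2 * PI * INR n / INR N).
  rewrite (sm_ext _ _ (fun n => sm N (fun l => w N l * (/2 * (cos (IZR (Z.of_nat e + Z.of_nat l) * al n) + cos (IZR (Z.of_nat e - Z.of_nat l) * al n)))))).
  2: { intros n _. rewrite <- sm_scal. apply sm_ext. intros l _.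
       rewrite plus_IZR, minus_IZR, <- INR_IZR_INZ.
       rewrite !Rmult_plus_distr_r, Rmult_minus_distr_r. rewrite <- !INR_IZR_INZ. rewrite cos_plus, cos_minus. unfold al. cbv beta. field. }
  rewrite sm_swap.
  rewrite (sm_ext _ _ (fun l => /2 * (w N l * (if Z.eqb ((Z.of_nat e + Z.of_nat l) mod Z.of_nat N) 0 then INR N else 0)) + /2 * (w N l * (if Z.eqb ((Z.of_nat e - Z.of_nat l) mod Z.of_nat N) 0 then INR N else 0)))).
  2: { intros l _. rewrite (sm_ext _ _ (fun n => (w N l * /2) * (cos (IZR (Z.of_nat e + Z.of_nat l) * al n) + cos (IZR (Z.of_nat e - Z.of_nat l) * al n)))) by (intros; ring).
       rewrite sm_scal, sm_plus. unfold al. rewrite !orth by auto. ring. }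
  rewrite sm_plus, !sm_scal.
  rewrite (sm_delta N (w N) (fun l => Z.eqb ((Z.of_nat e - Z.of_nat l) mod Z.of_nat N) 0) (INR N) e); auto.
  2: { cbv beta. apply Z.eqb_eq. rewrite Z.sub_diag. apply Z.mod_0_l. lia. }
  2: { intros l Hl Hb. cbv beta in Hb. apply Z.eqb_eq in Hb. apply Z.mod_divide in Hb; [|lia]. destruct Hb as [c Hc]. eapply zu1; eauto. }
  destruct (Nat.eq_dec e 0) as [->|Hne].
  - rewrite (sm_delta N (w N) (fun l => Z.eqb ((Z.of_nat 0 + Z.of_nat l) mod Z.of_nat N) 0) (INR N) 0); auto.
    2: { intros l Hl Hb. cbv beta in Hb. apply Z.eqb_eq in Hb. apply Z.mod_divide in Hb; [|lia]. destruct Hb as [c Hc]. apply (zu3 l N c Hl). simpl in *. lia. }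
    unfold w. simpl. field.
  - rewrite (sm_delta N (w N) (fun l => Z.eqb ((Z.of_nat e + Z.of_nat l) mod Z.of_nat N) 0) (INR N) (N - e)); try lia.
    2: { cbv beta. apply Z.eqb_eq. rewrite Nat2Z.inj_sub by lia. replace (Z.of_nat e + (Z.of_nat N - Z.of_nat e))%Z with (Z.of_nat N) by lia. apply Z.mod_same. lia. }
    2: { intros l Hl Hb. cbv beta in Hb. apply Z.eqb_eq in Hb. apply Z.mod_divide in Hb; [|lia]. destruct Hb as [c Hc]. eapply zu2; eauto. }
    unfold w. rewrite minus_INR by lia.
    assert (Hs : (-1) ^ (N - e) = - (-1) ^ e).
    { pose proof (neg1_odd N HO) as H1. replace N with (N - e + e)%nat in H1 at 1 by lia.
      rewrite pow_add in H1. pose proof (neg1_sq e). nra. }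
    rewrite Hs. field.
Qed.

Lemma sm_refl q h : sm (q - 1) (fun i => h (Sc i)) = sm (q - 1) (fun i => h (q - Sc i)%nat).
Proof. rewrite sm_rev. apply sm_ext. intros i Hi. f_equal. lia. Qed.

Lemma R1 q (f : nat -> R) : (0 < q)%nat -> (forall k, (k <= q)%nat -> f (q - k)%nat = - f k) ->
  sm (q - 1) (fun i => INR (Sc i) * f (Sc i)) = / 2 * sm (q - 1) (fun i => (2 * INR (Sc i) - INR q) * f (Sc i)).
Proof.
  intros Hq Hf.
  assert (H : sm (q - 1) (fun i => INR (Sc i) * f (Sc i)) = - sm (q - 1) (fun i => (INR q - INR (Sc i)) * f (Sc i))).
  { rewrite (sm_refl q (fun k => INR k * f k)).
    rewrite <- (Rmult_1_l (sm _ (fun i => (INR q - INR (Sc i)) * f (Sc i)))).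
    rewrite Ropp_mult_distr_l, <- sm_scal. apply sm_ext. intros i Hi. rewrite minus_INR by lia. rewrite Hf by lia. ring. }
  assert (H2 : sm (q - 1) (fun i => (2 * INR (Sc i) - INR q) * f (Sc i)) =
     sm (q - 1) (fun i => INR (Sc i) * f (Sc i)) - sm (q - 1) (fun i => (INR q - INR (Sc i)) * f (Sc i))).
  { rewrite <- sm_minus. apply sm_ext. intros. ring. }
  rewrite H2. lra.
Qed.

Lemma R2 q (g : nat -> R) (c : nat -> R) : (0 < q)%nat ->
  (forall k, (k <= q)%nat -> c (q - k)%nat = - c k) ->
  sm (q - 1) (fun i => c (Sc i) * g (Sc i)) = - sm (q - 1) (fun i => c (Sc i) * g (q - Sc i)%nat).
Proof.
  intros Hq Hc. rewrite (sm_refl q (fun k => c k * g k)).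
  rewrite <- (Rmult_1_l (sm _ (fun i => c (Sc i) * g (q - Sc i)%nat))).
  rewrite Ropp_mult_distr_l, <- sm_scal. apply sm_ext. intros i Hi. rewrite Hc by lia.
  replace (q - (q - Sc i))%nat with (Sc i) by lia. ring.
Qed.

Lemma CpCq p q n : (0 < p)%nat -> (0 < q)%nat ->
  Cp p n * Cp q n = 2 / (INR p * INR q) *
    sm (p - 1) (fun i => INR (Sc i) * sm (q - 1) (fun k => (2 * INR (Sc k) - INR q) *
      cos ((INR (Sc i) * INR q - INR (Sc k) * INR p) * (2 * PI * INR n / INR (p * q))))).
Proof.
  intros Hp Hq.
  assert (Hp' : INR p <> 0) by (apply not_0_INR; lia).
  assert (Hq' : INR q <> 0) by (apply not_0_INR; lia).
  set (al := 2 * PI * INR n / INR (p * q)).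
  assert (Hal : INR p * INR q * al = 2 * INR n * PI) by (unfold al; rewrite mult_INR; field; auto).
  assert (E1 : Cp p n = -(2 / INR p) * sm (p - 1) (fun i => INR (Sc i) * sin (INR (Sc i) * INR q * al))).
  { unfold Cp. f_equal. apply sm_ext. intros. f_equal. f_equal. unfold al. rewrite mult_INR. field. auto. }
  assert (E2 : Cp q n = -(1 / INR q) * sm (q - 1) (fun k => (2 * INR (Sc k) - INR q) * sin (INR (Sc k) * INR p * al))).
  { unfold Cp. rewrite (sm_ext _ _ (fun i => INR (Sc i) * (fun k => sin (INR k * INR p * al)) (Sc i))).
    2: { intros. cbv beta. f_equal. f_equal. unfold al. rewrite mult_INR. field. auto. }
    rewrite (R1 q (fun k => sin (INR k * INR p * al))); auto. field. auto.
    intros k Hk. rewrite minus_INR by auto.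
    replace ((INR q - INR k) * INR p * al) with (- (INR k * INR p * al) + 2 * INR n * PI) by lra.
    rewrite sin_period, sin_neg. auto. }
  rewrite E1, E2.
  set (A := fun i : nat => INR i * INR q * al).
  set (B := fun k : nat => INR k * INR p * al).
  assert (E3 : forall i, sin (A i) * sm (q - 1) (fun k => (2 * INR (Sc k) - INR q) * sin (B (Sc k))) =
     sm (q - 1) (fun k => (2 * INR (Sc k) - INR q) * cos (A i - B (Sc k)))).
  { intro i. rewrite <- sm_scal.
    rewrite (sm_ext _ _ (fun k => / 2 * ((2 * INR (Sc k) - INR q) * cos (A i - B (Sc k))) - / 2 * ((fun k => 2 * INR k - INR q) (Sc k) * (fun k => cos (A i + B k)) (Sc k)))).
    2: { intros. cbv beta. rewrite cos_plus, cos_minus. field. }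
    rewrite sm_minus, !sm_scal. rewrite (R2 q (fun k => cos (A i + B k)) (fun k => 2 * INR k - INR q)); auto.
    2: { intros k Hk. rewrite minus_INR by auto. ring. }
    rewrite (sm_ext (q - 1) (fun i0 => (fun k => 2 * INR k - INR q) (Sc i0) * (fun k => cos (A i + B k)) (q - Sc i0)%nat) (fun k => (2 * INR (Sc k) - INR q) * cos (A i - B (Sc k)))). field.
    intros k Hk. cbv beta. f_equal. unfold A, B. rewrite minus_INR by lia.
    replace (INR i * INR q * al + (INR q - INR (Sc k)) * INR p * al) with ((INR i * INR q * al - INR (Sc k) * INR p * al) + 2 * INR n * PI) by lra.
    rewrite cos_period. auto. }
  unfold A, B in E3.
  set (Q := sm (q - 1) (fun k => (2 * INR (Sc k) - INR q) * sin (INR (Sc k) * INR p * al))) in *.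
  replace (-(2 / INR p) * sm (p - 1) (fun i => INR (Sc i) * sin (INR (Sc i) * INR q * al)) * (-(1 / INR q) * Q))
    with (2 / (INR p * INR q) * (sm (p - 1) (fun i => INR (Sc i) * sin (INR (Sc i) * INR q * al)) * Q)) by (field; auto).
  f_equal. rewrite Rmult_comm, <- sm_scal. apply sm_ext. intros i _.
  replace (Q * (INR (Sc i) * sin (INR (Sc i) * INR q * al))) with (INR (Sc i) * (sin (INR (Sc i) * INR q * al) * Q)) by ring.
  rewrite E3. f_equal. apply sm_ext. intros k _. f_equal. f_equal. ring.
Qed.

Lemma fold_filter (f : nat -> R) (P : nat -> bool) a n :
  fold_right Rplus 0 (map f (filter P (seq a n))) = sm n (fun i => if P (a + i)%nat then f (a + i)%nat else 0).
Proof.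
  revert a. induction n; intros a; auto.
  rewrite sm_shift. simpl seq. simpl filter. rewrite Nat.add_0_r.
  rewrite (sm_ext n _ (fun i => if P (Sc a + i)%nat then f (Sc a + i)%nat else 0)).
  2: { intros. rewrite Nat.add_succ_r. auto. }
  rewrite <- IHn. destruct (P a); simpl; lra.
Qed.

Lemma neg1_mul_odd p k : Nat.Odd p -> (-1) ^ (k * p) = (-1) ^ k.
Proof. intros [t ->]. replace (k * (2 * t + 1))%nat with (2 * (k * t) + k)%nat by lia.
  rewrite pow_add, pow_mult. replace ((-1) ^ 2) with 1 by (simpl; ring). rewrite pow1. ring. Qed.

Lemma sign_lem p q j k e : Nat.Odd p -> Nat.Odd q -> (e + k * p = j * q)%nat -> (-1) ^ e = (-1) ^ (j + k).
Proof.
  intros Hp Hq H. assert (H1 : (-1) ^ e * (-1) ^ k = (-1) ^ j).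
  { rewrite <- (neg1_mul_odd p k Hp), <- (neg1_mul_odd q j Hq), <- pow_add, H. auto. }
  rewrite pow_add, <- H1. rewrite Rmult_assoc, neg1_sq. ring.
Qed.

Lemma W_jk p q j k : Nat.Odd p -> Nat.Odd q -> (j < p)%nat -> (k < q)%nat ->
  W (p * q) (Z.of_nat (j * q) - Z.of_nat (k * p)) =
  INR (p * q) * (-1) ^ (j + k) * (INR (p * q) - 2 * Rabs (INR j * INR q - INR k * INR p)).
Proof.
  intros Hp Hq Hj Hk. assert (HO : Nat.Odd (p * q)) by (apply Nat.Odd_mul; auto).
  destruct (le_lt_dec (k * p) (j * q)) as [Hle|Hlt].
  - rewrite <- Nat2Z.inj_sub by auto. rewrite W_nat by (auto; nia).
    rewrite (sign_lem p q j k (j * q - k * p)) by (auto; lia).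
    rewrite minus_INR by auto. rewrite !mult_INR. rewrite Rabs_right.
    + ring.
    + apply le_INR in Hle. rewrite !mult_INR in Hle. lra.
  - replace (Z.of_nat (j * q) - Z.of_nat (k * p))%Z with (- Z.of_nat (k * p - j * q))%Z by lia.
    rewrite W_neg. rewrite W_nat by (auto; nia).
    rewrite (sign_lem q p k j (k * p - j * q)) by (auto; lia). rewrite Nat.add_comm.
    rewrite minus_INR by lia. rewrite !mult_INR. rewrite Rabs_left.
    + ring.
    + apply lt_INR in Hlt. rewrite !mult_INR in Hlt. lra.
Qed.

Definition E (p q : nat) : R :=
  sm (p - 1) (fun i => sm (q - 1) (fun k => INR (Sc i) * (2 * INR (Sc k) - INR q) * (-1) ^ (Sc i + Sc k) *
     (INR (p * q) - 2 * Rabs (INR (Sc i) * INR q - INR (Sc k) * INR p)))).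

Lemma sm_scal_r n f c : sm n f * c = sm n (fun i => f i * c).
Proof. rewrite Rmult_comm, <- sm_scal. apply sm_ext. intros; ring. Qed.

Lemma S_eq_E p q : (3 <= p)%nat -> (3 <= q)%nat -> Nat.Odd p -> Nat.Odd q -> S p q = 2 * E p q.
Proof.
  intros H3p H3q Hp Hq.
  assert (HO : Nat.Odd (p * q)) by (apply Nat.Odd_mul; auto).
  assert (Hp' : INR p <> 0) by (apply not_0_INR; lia).
  assert (Hq' : INR q <> 0) by (apply not_0_INR; lia).
  set (N := (p * q)%nat).
  assert (Step1 : S p q = sm N (fun n => Cp p n * Cp q n * sec2 N n)).
  { unfold S. rewrite fold_filter. replace N with (Sc (N - 1)) by (unfold N; nia).
    rewrite sm_shift. rewrite (Cp_zero p 0) by (try apply Nat.Div0.mod_0_l; lia). rewrite Rmult_0_l, Rmult_0_l, Rplus_0_l.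
    replace (Sc (N - 1)) with N by (unfold N; nia). fold N.
    apply sm_ext. intros i Hi. simpl (1 + i)%nat.
    destruct (Nat.eqb_spec (Sc i mod p) 0) as [E1|E1]; destruct (Nat.eqb_spec (Sc i mod q) 0) as [E2|E2]; simpl.
    - rewrite (Cp_zero p) by (auto; lia). ring.
    - rewrite (Cp_zero p) by (auto; lia). ring.
    - rewrite (Cp_zero q) by (auto; lia). ring.
    - unfold term. rewrite !Cp_cot by (auto; lia). rewrite <- sec2_eq by auto. unfold N. field.
      apply cos_nz; auto. }
  rewrite Step1.
  transitivity (sm N (fun n => 2 / (INR p * INR q) * sm (p - 1) (fun i => sm (q - 1) (fun k =>
     INR (Sc i) * (2 * INR (Sc k) - INR q) *
     (cos ((INR (Sc i) * INR q - INR (Sc k) * INR p) * (2 * PI * INR n / INR N)) * sec2 N n))))).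
  { apply sm_ext. intros n _. unfold N. rewrite CpCq by lia. rewrite Rmult_assoc. f_equal.
    rewrite sm_scal_r. apply sm_ext. intros i _. rewrite Rmult_assoc. rewrite sm_scal_r, <- sm_scal.
    apply sm_ext. intros k _. ring. }
  rewrite sm_scal, sm_swap.
  transitivity (2 / (INR p * INR q) * sm (p - 1) (fun i => sm (q - 1) (fun k =>
     INR (Sc i) * (2 * INR (Sc k) - INR q) * W N (Z.of_nat (Sc i * q) - Z.of_nat (Sc k * p))))).
  { f_equal. apply sm_ext. intros i _. rewrite sm_swap. apply sm_ext. intros k _. rewrite sm_scal. f_equal.
    unfold W. apply sm_ext. intros n _. f_equal. f_equal. f_equal.
    rewrite minus_IZR, <- !INR_IZR_INZ, !mult_INR. auto. }
  unfold E. rewrite <- !sm_scal. apply sm_ext. intros i Hi. rewrite <- !sm_scal. apply sm_ext. intros k Hk.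
  unfold N. rewrite W_jk by (auto; lia). rewrite mult_INR. field. auto.
Qed.

Definition pa (f3 : R) := f3 / 2.
Definition pb (f3 f2 : R) := (f2 + 3 * pa f3) / 2.
Definition pc (f3 f2 f1 : R) := (f1 - 3 * pa f3 + 2 * pb f3 f2) / 2.
Definition pd (f3 f2 f1 f0 : R) := (f0 + pa f3 - pb f3 f2 + pc f3 f2 f1) / 2.
Definition Pc (f3 f2 f1 f0 x : R) := pa f3 * x ^ 3 + pb f3 f2 * x ^ 2 + pc f3 f2 f1 * x + pd f3 f2 f1 f0.

Lemma alt_sum f3 f2 f1 f0 (f : R -> R) a n :
  (forall x, f x = f3 * x ^ 3 + f2 * x ^ 2 + f1 * x + f0) ->
  sm n (fun i => (-1) ^ (a + i + 1) * f (INR (a + i + 1))) =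
  (-1) ^ (a + n) * Pc f3 f2 f1 f0 (INR (a + n)) - (-1) ^ a * Pc f3 f2 f1 f0 (INR a).
Proof.
  intros Hf. induction n.
  - simpl. rewrite Nat.add_0_r. ring.
  - simpl sm. rewrite IHn. rewrite Hf.
    replace (a + Sc n)%nat with (Sc (a + n)) by lia. replace (a + n + 1)%nat with (Sc (a + n)) by lia.
    rewrite S_INR. simpl pow. unfold Pc, pd, pc, pb, pa. field.
Qed.

Lemma neg1_even m : Nat.Even m -> (-1) ^ m = 1.
Proof. intros [t ->]. rewrite pow_mult. replace ((-1) ^ 2) with 1 by (simpl; ring). apply pow1. Qed.

Lemma inner_p1 p m j q : (1 <= j)%nat -> (j < p)%nat -> Nat.Even m -> (1 <= m)%nat -> q = (m * p + 1)%nat ->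
  sm (q - 1) (fun k => INR j * (2 * INR (Sc k) - INR q) * (-1) ^ (j + Sc k) *
     (INR (p * q) - 2 * Rabs (INR j * INR q - INR (Sc k) * INR p))) =
  (-1) ^ j * (4 * INR m * INR j ^ 2 * (INR p - INR j)).
Proof.
  intros Hj Hjp Hm Hm1 Hq.
  assert (HQ : INR q = INR m * INR p + 1) by (rewrite Hq, plus_INR, mult_INR; simpl; ring).
  assert (HJP : INR j + 1 <= INR p) by (rewrite <- S_INR; apply le_INR; lia).
  assert (HJ1 : 1 <= INR j) by (replace 1 with (INR 1) by auto; apply le_INR; lia).
  set (c := (-1) ^ j * INR j).
  set (Q := INR q) in *. set (Nr := INR (p * q)).
  set (J := INR j) in *. set (M := INR m) in *. set (P := INR p) in *.
  set (f1 := fun x => c * (2 * x - Q) * (Nr - 2 * J * Q + 2 * P * x)).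
  set (f2 := fun x => c * (2 * x - Q) * (Nr + 2 * J * Q - 2 * P * x)).
  assert (Hjm : (j * m < m * p)%nat) by nia.
  replace (q - 1)%nat with (j * m + (q - 1 - j * m))%nat by lia. rewrite sm_split.
  rewrite (sm_ext (j * m) _ (fun i => (-1) ^ (0 + i + 1) * f1 (INR (0 + i + 1)))).
  2: { intros i Hi. replace (0 + i + 1)%nat with (Sc i) by lia. unfold f1, c.
       assert (Hk : INR (Sc i) <= J * M) by (unfold J, M; rewrite <- mult_INR; apply le_INR; lia).
       rewrite Rabs_right. rewrite pow_add. ring.
       rewrite HQ. assert (0 <= P) by lra. nra. }
  rewrite (sm_ext (q - 1 - j * m) _ (fun i => (-1) ^ (j * m + i + 1) * f2 (INR (j * m + i + 1)))).
  2: { intros i Hi. replace (j * m + i + 1)%nat with (Sc (j * m + i)) by lia. unfold f2, c.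
       assert (Hk : J * M + 1 <= INR (Sc (j * m + i))) by (unfold J, M; rewrite <- mult_INR, <- S_INR; apply le_INR; lia).
       rewrite Rabs_left. rewrite pow_add. ring.
       rewrite HQ. assert (0 <= P) by lra. nra. }
  rewrite (alt_sum 0 (2 * (2 * P) * c) ((2 * (Nr - 2 * J * Q) - Q * (2 * P)) * c) (- Q * (Nr - 2 * J * Q) * c) f1 0 (j * m)) by (intros; unfold f1; ring).
  rewrite (alt_sum 0 (2 * (-2 * P) * c) ((2 * (Nr + 2 * J * Q) - Q * (-2 * P)) * c) (- Q * (Nr + 2 * J * Q) * c) f2 (j * m) (q - 1 - j * m)) by (intros; unfold f2; ring).
  replace (j * m + (q - 1 - j * m))%nat with (m * p)%nat by lia.
  rewrite !Nat.add_0_l.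
  assert (Ejm : Nat.Even (j * m)) by (apply Nat.Even_mul_r; auto).
  assert (Emp : Nat.Even (m * p)) by (apply Nat.Even_mul_l; auto).
  rewrite (neg1_even (m * p) Emp), (neg1_even (j * m) Ejm).
  rewrite !mult_INR. fold J M P. simpl (INR 0). simpl ((-1)^0).
  unfold Nr. rewrite mult_INR. fold P Q. rewrite HQ.
  unfold Pc, pd, pc, pb, pa, c. field.
Qed.

Lemma inner_m1 p m j q : (1 <= j)%nat -> (j < p)%nat -> Nat.Even m -> (1 <= m)%nat -> q = (m * p - 1)%nat ->
  sm (q - 1) (fun k => INR j * (2 * INR (Sc k) - INR q) * (-1) ^ (j + Sc k) *
     (INR (p * q) - 2 * Rabs (INR j * INR q - INR (Sc k) * INR p))) =
  (-1) ^ j * (4 * INR m * INR j ^ 2 * (INR p - INR j)).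
Proof.
  intros Hj Hjp Hm Hm1 Hq.
  assert (Hm2 : (2 <= m)%nat) by (destruct Hm as [t Ht]; lia).
  assert (Hmp : (2 <= m * p)%nat) by nia.
  assert (HQ : INR q = INR m * INR p - 1) by (rewrite Hq, minus_INR, mult_INR by lia; simpl; ring).
  assert (HJP : INR j + 1 <= INR p) by (rewrite <- S_INR; apply le_INR; lia).
  assert (HJ1 : 1 <= INR j) by (replace 1 with (INR 1) by auto; apply le_INR; lia).
  assert (Hjm : (j * m < m * p)%nat) by nia.
  assert (Hjm2 : (2 <= j * m)%nat) by nia.
  set (K := (j * m - 1)%nat).
  assert (HK : INR K = INR j * INR m - 1) by (unfold K; rewrite minus_INR, mult_INR by lia; simpl; ring).
  set (c := (-1) ^ j * INR j).
  set (Q := INR q) in *. set (Nr := INR (p * q)).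
  set (J := INR j) in *. set (M := INR m) in *. set (P := INR p) in *.
  set (f1 := fun x => c * (2 * x - Q) * (Nr - 2 * J * Q + 2 * P * x)).
  set (f2 := fun x => c * (2 * x - Q) * (Nr + 2 * J * Q - 2 * P * x)).
  replace (q - 1)%nat with (K + (q - 1 - K))%nat by (unfold K; lia). rewrite sm_split.
  rewrite (sm_ext K _ (fun i => (-1) ^ (0 + i + 1) * f1 (INR (0 + i + 1)))).
  2: { intros i Hi. replace (0 + i + 1)%nat with (Sc i) by lia. unfold f1, c.
       assert (Hk : INR (Sc i) <= J * M - 1) by (rewrite <- HK; apply le_INR; lia).
       rewrite Rabs_right. rewrite pow_add. ring.
       rewrite HQ. assert (0 <= P) by lra. nra. }
  rewrite (sm_ext (q - 1 - K) _ (fun i => (-1) ^ (K + i + 1) * f2 (INR (K + i + 1)))).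
  2: { intros i Hi. replace (K + i + 1)%nat with (Sc (K + i)) by lia. unfold f2, c.
       assert (Hk : J * M <= INR (Sc (K + i))) by (unfold J, M; rewrite <- mult_INR; apply le_INR; unfold K; lia).
       rewrite Rabs_left. rewrite pow_add. ring.
       rewrite HQ. assert (0 <= P) by lra. nra. }
  rewrite (alt_sum 0 (2 * (2 * P) * c) ((2 * (Nr - 2 * J * Q) - Q * (2 * P)) * c) (- Q * (Nr - 2 * J * Q) * c) f1 0 K) by (intros; unfold f1; ring).
  rewrite (alt_sum 0 (2 * (-2 * P) * c) ((2 * (Nr + 2 * J * Q) - Q * (-2 * P)) * c) (- Q * (Nr + 2 * J * Q) * c) f2 K (q - 1 - K)) by (intros; unfold f2; ring).
  replace (K + (q - 1 - K))%nat with (m * p - 2)%nat by (unfold K; lia).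
  rewrite !Nat.add_0_l.
  assert (Ejm : Nat.Even (j * m)) by (apply Nat.Even_mul_r; auto).
  assert (Emp : Nat.Even (m * p - 2)).
  { destruct Hm as [t Ht]. exists (t * p - 1)%nat. subst m. nia. }
  assert (HsK : (-1) ^ K = -1).
  { pose proof (neg1_even (j * m) Ejm) as H1. replace (j * m)%nat with (Sc K) in H1 by (unfold K; lia).
    simpl in H1. lra. }
  rewrite (neg1_even (m * p - 2) Emp), HsK.
  rewrite minus_INR, mult_INR by lia. fold M P. rewrite HK. simpl (INR 0). simpl ((-1)^0). simpl (INR 2).
  unfold Nr. rewrite mult_INR. fold P Q. rewrite HQ.
  unfold Pc, pd, pc, pb, pa, c. field.
Qed.

Lemma outer p m : Nat.Odd p -> (1 <= p)%nat ->
  sm (p - 1) (fun i => (-1) ^ (Sc i) * (4 * INR m * INR (Sc i) ^ 2 * (INR p - INR (Sc i)))) = INR m * (INR p ^ 2 - 1).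
Proof.
  intros Hp H1.
  set (f := fun x => 4 * INR m * x ^ 2 * (INR p - x)).
  rewrite (sm_ext _ _ (fun i => (-1) ^ (0 + i + 1) * f (INR (0 + i + 1)))).
  2: { intros. replace (0 + i + 1)%nat with (Sc i) by lia. auto. }
  rewrite (alt_sum (- 4 * INR m) (4 * INR m * INR p) 0 0 f 0 (p - 1)) by (intros; unfold f; ring).
  rewrite Nat.add_0_l. rewrite neg1_even.
  2: { destruct Hp as [t Ht]. exists t. lia. }
  rewrite minus_INR by lia. simpl (INR 0). simpl (INR 1). simpl ((-1)^0).
  unfold Pc, pd, pc, pb, pa. field.
Qed.

Lemma E_val p q m : (3 <= p)%nat -> Nat.Even m -> (1 <= m)%nat ->
  (q = m * p + 1 \/ q = m * p - 1)%nat -> Nat.Odd p ->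
  E p q = INR m * (INR p ^ 2 - 1).
Proof.
  intros Hp Hm Hm1 Hq Hpo. unfold E. rewrite <- (outer p m Hpo) by lia.
  apply sm_ext. intros i Hi.
  destruct Hq as [Hq|Hq].
  - rewrite (inner_p1 p m (Sc i) q) by (auto; lia). auto.
  - rewrite (inner_m1 p m (Sc i) q) by (auto; lia). auto.
Qed.

Lemma even_of p q m : Nat.Odd p -> Nat.Odd q -> (q = m * p + 1 \/ q + 1 = m * p)%nat -> Nat.Even m.
Proof.
  intros Hp Hq Hqm. destruct (Nat.Even_or_Odd m) as [He|Ho]; auto. exfalso.
  pose proof (Nat.Odd_mul _ _ Ho Hp) as [d Hd]. destruct Hq as [c Hc]. lia.
Qed.

Theorem mainTheorem14 (p q : nat) :
  (3 <= p)%nat -> (3 <= q)%nat -> Nat.Odd p -> Nat.Odd q -> Nat.gcd p q = 1%nat ->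
  ((q mod p = 1%nat)%nat ->
     S p q = 2 / INR p * (INR p ^ 2 - 1) * (INR q - 1)) /\
  ((q mod p = p - 1)%nat ->
     S p q = 2 / INR p * (INR p ^ 2 - 1) * (INR q + 1)).
Proof.
  intros Hp Hq Hpo Hqo Hg.
  assert (HP : INR p <> 0) by (apply not_0_INR; lia).
  pose proof (Nat.div_mod_eq q p) as Hdm.
  split; intros Hmod.
  - set (m := (q / p)%nat) in *.
    assert (Hqm : q = (m * p + 1)%nat) by lia.
    assert (Hm1 : (1 <= m)%nat) by (destruct m; lia).
    assert (Hme : Nat.Even m) by (apply (even_of p q m); auto).
    rewrite S_eq_E by auto. rewrite (E_val p q m) by auto.
    rewrite Hqm, plus_INR, mult_INR. simpl (INR 1). field. auto.
  - set (m := Sc (q / p)) in *.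
    assert (Hqm : (q + 1 = m * p)%nat) by (unfold m; lia).
    assert (Hm1 : (1 <= m)%nat) by (unfold m; lia).
    assert (Hme : Nat.Even m) by (apply (even_of p q m); auto).
    rewrite S_eq_E by auto. rewrite (E_val p q m) by (auto; lia).
    assert (HQ : INR q + 1 = INR m * INR p) by (rewrite <- mult_INR, <- Hqm, plus_INR; simpl; ring).
    rewrite HQ. field. auto.
Qed.
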